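(* For all $n\ge0$, $z(n)\in\{f(n),\ f(n)+n,\ f(n)+1,\ f(n)-n\}$.
   Context: $\mathbb{N}=\{0,1,2,\dots\}$. The sequence $f:\mathbb{N}\to\mathbb{N}$ is defined greedily: $f(0)=0$, and for $n\ge1$, $f(n)$ is the least natural number such that (i) $f(n)\notin\{f(0),f(1),\dots,f(n-1)\}$ and (ii) $\sum_{1\le i\le n} f(i)$ is divisible by $n$. The sequence $z:\mathbb{N}\to\mathbb{N}$ is defined greedily: $z(0)=0$, and for $n\ge1$, $z(n)$ is the least natural number such that (i) $z(n)\notin\{z(0),\dots,z(n-1)\}$ and (ii) $\sum_{2\le i\le n} z(i)$ is divisible by $n+1$ (the empty sum being $0$). *)

(* Defs.v *)
From mathcomp Require Import all_boot.
Set Implicit Arguments. Unset Strict Implicit. Unset Printing Implicit Defensive.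

(* A greedy sequence is built from its history s = [:: a(0); ...; a(n-1)]
   (so n = size s): a(n) is the least natural m satisfying [ok s m].
   The search is over [0, (n+1)(n+2)); this bound is always large enough
   for the predicates below (the admissible m form a residue class modulo
   n (resp. n+1); at most n of its first n+1 members are excluded by the
   history, so a valid m exists below n + n*(n+1) < (n+1)(n+2)).  Since
   the search list is increasing, its head is the least admissible m. *)
Definition greedy_next (ok : seq nat -> nat -> bool) (s : seq nat) : nat :=
  head 0 [seq m <- iota 0 ((size s).+1 * (size s).+2) | ok s m].

Fixpoint greedy_hist (ok : seq nat -> nat -> bool) (n : nat) : seq nat :=
  match n with
  | 0 => [:: 0]
  | k.+1 => let s := greedy_hist ok k in rcons s (greedy_next ok s)
  end.

Definition greedy_seq (ok : seq nat -> nat -> bool) (n : nat) : nat :=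
  nth 0 (greedy_hist ok n) n.

(* f: f(n) not among f(0..n-1), and n divides sum_{1<=i<=n} f(i) *)
Definition f_ok (s : seq nat) (m : nat) : bool :=
  (m \notin s) && (size s %| sumn (drop 1 (rcons s m))).

(* z: z(n) not among z(0..n-1), and n+1 divides sum_{2<=i<=n} z(i) *)
Definition z_ok (s : seq nat) (m : nat) : bool :=
  (m \notin s) && ((size s).+1 %| sumn (drop 2 (rcons s m))).

Definition f := greedy_seq f_ok.
Definition z := greedy_seq z_ok.

(* Main.v *)
Require Import Defs.
From mathcomp Require Import all_boot zify.

Lemma greedy_next_eq (ok : seq nat -> nat -> bool) s c :
  c < (size s).+1 * (size s).+2 -> ok s c ->
  (forall x, x < c -> ~~ ok s x) -> greedy_next ok s = c.
Proof.
move=> hc okc hmin; rewrite /greedy_next.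
have -> : (size s).+1 * (size s).+2 = c + ((size s).+1 * (size s).+2 - c - 1).+1 by lia.
rewrite iotaD filter_cat /= okc.
have -> : [seq m <- iota 0 c | ok s m] = [::].
  rewrite -(filter_pred0 (iota 0 c)); apply: eq_in_filter => x.
  rewrite mem_iota => h; apply/negbTE/hmin; lia.
by [].
Qed.

Lemma dvd_between d a x : d %| d * a + (x - a) -> a < x -> x < a + d -> False.
Proof.
move=> h h1 h2; move: h; rewrite dvdn_addr ?dvdn_mulr // => /dvdn_leq.
have : 0 < x - a by lia.
move=> p /(_ p); lia.
Qed.

Lemma f_step s n a :
  size s = n.+1 -> sumn (drop 1 s) = n * a -> a <= n ->
  (forall x, x < a -> x \in s) -> (forall x, x \in s -> x <= a + n) ->
  greedy_next f_ok s = if a \in s then a + n.+1 else a.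
Proof.
move=> hs hsum han hlt hle.
have key : forall x, f_ok s x = (x \notin s) && (n.+1 %| n * a + x).
  by move=> x; rewrite /f_ok hs drop_rcons ?hs // sumn_rcons hsum.
case: ifP => ha; apply: greedy_next_eq; rewrite ?hs ?key.
- nia.
- apply/andP; split.
    by apply/negP => /hle; lia.
  have -> : n * a + (a + n.+1) = n.+1 * a.+1 by lia.
  exact: dvdn_mulr.
- move=> x hx; rewrite key negb_and negbK.
  case: (ltngtP x a) => hxa.
  + by rewrite hlt.
  + apply/orP; right; apply/negP => hd.
    apply: (@dvd_between n.+1 a x _ hxa); last lia.
    have -> : n.+1 * a + (x - a) = n * a + x by lia.
    exact: hd.
  + by rewrite hxa ha.
- nia.
- rewrite ha /=; have -> : n * a + a = n.+1 * a by lia. exact: dvdn_mulr.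
- by move=> x /hlt h; rewrite key h.
Qed.

Lemma z_step s n b :
  size s = n.+1 -> 1 <= n -> sumn (drop 2 s) = n.+1 * b -> b <= n ->
  (forall x, x < b -> x \in s) -> (forall x, x \in s -> x <= b + n.+1) ->
  greedy_next z_ok s = if b \in s then b + n.+2 else b.
Proof.
move=> hs hn hsum han hlt hle.
have key : forall x, z_ok s x = (x \notin s) && (n.+2 %| n.+1 * b + x).
  by move=> x; rewrite /z_ok hs drop_rcons ?hs // sumn_rcons hsum.
case: ifP => ha; apply: greedy_next_eq; rewrite ?hs ?key.
- nia.
- apply/andP; split.
    by apply/negP => /hle; lia.
  have -> : n.+1 * b + (b + n.+2) = n.+2 * b.+1 by lia.
  exact: dvdn_mulr.
- move=> x hx; rewrite key negb_and negbK.
  case: (ltngtP x b) => hxa.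
  + by rewrite hlt.
  + apply/orP; right; apply/negP => hd.
    apply: (@dvd_between n.+2 b x _ hxa); last lia.
    have -> : n.+2 * b + (x - b) = n.+1 * b + x by lia.
    exact: hd.
  + by rewrite hxa ha.
- nia.
- rewrite ha /=; have -> : n.+1 * b + b = n.+2 * b by lia. exact: dvdn_mulr.
- by move=> x /hlt h; rewrite key h.
Qed.

Definition Inv (n a b : nat) (F Z : seq nat) : Prop :=
  [/\ [/\ 2 <= n, sumn (drop 1 F) = n * a, sumn (drop 2 Z) = n.+1 * b, 1 <= a & a <= n],
      [/\ (forall x, x < a -> x \in F), (forall x, x < b -> x \in Z),
          (forall x, x \in F -> x <= a + n) & (forall x, x \in Z -> x <= a + n)] &
   (a = b.+1 /\ b \in Z /\
      forall v, (v \in Z) && (v \notin F) = (v.+1 \in F) && (v.+1 \notin Z))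
   \/
   (a = b /\ a \in F /\ exists p, p = (if a \in Z then a else a.-1) /\
      (p.+1 \in F) && (p.+1 \notin Z) /\ ~~ ((p \in Z) && (p \notin F)) /\
      forall v, ((v \in Z) && (v \notin F)) || (v == p) =
                ((v.+1 \in F) && (v.+1 \notin Z)) || (v == a + n))].

Ltac decide_eqs :=
  repeat match goal with
  | |- context[?x == ?y :> nat] =>
      (have -> : (x == y) = true by apply/eqP; lia) ||
      (have -> : (x == y) = false by apply/eqP; lia)
  end.

Ltac brute :=
  repeat match goal with
  | |- context[?x \in ?s] => case: (x \in s)
  | |- context[?x == ?y :> nat] => case: (x == y)
  end; try done.

Ltac kill_big :=
  repeat match goal with
  | |- context[?x \in ?s] =>
      (have -> : (x \in s) = false by apply/negP => /hleF; lia) ||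
      (have -> : (x \in s) = false by apply/negP => /hleZ; lia)
  end.

Ltac fin := decide_eqs; kill_big; brute.

Lemma step n a b F Z :
  Inv n a b F Z -> size F = n.+1 -> size Z = n.+1 ->
  let gf := greedy_next f_ok F in let gz := greedy_next z_ok Z in
  (gz = gf \/ gz = gf + n.+1 \/ gz = gf + 1 \/ gz + n.+1 = gf) /\
  exists a' b', Inv n.+1 a' b' (rcons F gf) (rcons Z gz).
Proof.
move=> [[hn sf sz ha1 han] [hltF hltZ hleF hleZ] hd] szF szZ /=.
have bF : forall x, a + n < x -> (x \in F) = false.
  by move=> x hx; apply/negP => /hleF; lia.
have bZ : forall x, a + n < x -> (x \in Z) = false.
  by move=> x hx; apply/negP => /hleZ; lia.
have sF x : sumn (drop 1 (rcons F x)) = n * a + x.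
  by rewrite drop_rcons ?sumn_rcons ?sf // szF.
have sZ x : sumn (drop 2 (rcons Z x)) = n.+1 * b + x.
  rewrite drop_rcons ?sumn_rcons ?sz // szZ; lia.
have gfE := @f_step F n a szF sf han hltF hleF.
case: hd => [[ab [bZin E1]] | [ab [aF [p [pE [P1 [P2 E0]]]]]]].
-
  have gzE : greedy_next z_ok Z = b + n.+2.
    rewrite (@z_step Z n b) ?bZin //; try lia.
    by move=> x hx; have := hleZ x hx; lia.
  rewrite gzE gfE; case: ifP => aF.
  +
    split; first by left; lia.
    exists a.+1, b.+1; split.
    * split => //; try lia; rewrite ?sF ?sZ; lia.
    * split.
      - move=> x hx; rewrite mem_rcons in_cons; case: (ltngtP x a) => h.
        + by rewrite hltF ?orbT.
        + lia.
        + by rewrite h aF orbT.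
      - move=> x hx; rewrite mem_rcons in_cons; case: (ltngtP x b) => h.
        + by rewrite hltZ ?orbT.
        + lia.
        + by rewrite h bZin orbT.
      - move=> x; rewrite mem_rcons in_cons => /orP[/eqP->|/hleF]; lia.
      - move=> x; rewrite mem_rcons in_cons => /orP[/eqP->|/hleZ]; lia.
    * left; split; first lia; split.
      -
        have e := E1 b; rewrite -ab (hltF b) in e; last lia.
        rewrite aF andbF /= in e.
        rewrite mem_rcons in_cons; apply/orP; right.
        by rewrite -ab; move: e; case: (a \in Z).
      - move=> v; rewrite !mem_rcons !in_cons.
        have e := E1 v.
        case: (eqVneq v (a + n.+1)) => hv.
          { subst v; move: e; fin. }
        case: (eqVneq v (a + n)) => hv2.
          { subst v; move: e; fin. }
        move: e; fin.
  +
    split; first by right; left; lia.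
    exists a, b.+1; split.
    * split => //; try lia; rewrite ?sF ?sZ; lia.
    * split.
      - move=> x hx; rewrite mem_rcons in_cons hltF ?orbT //.
      - move=> x hx; rewrite mem_rcons in_cons; case: (ltngtP x b) => h.
        + by rewrite hltZ ?orbT.
        + lia.
        + by rewrite h bZin orbT.
      - move=> x; rewrite mem_rcons in_cons => /orP[/eqP->|/hleF]; lia.
      - move=> x; rewrite mem_rcons in_cons => /orP[/eqP->|/hleZ]; lia.
    * right; split; first lia; split.
        by rewrite mem_rcons in_cons eqxx.
      have aZ' : (a \in rcons Z (b + n.+2)) = (a \in Z).
        by rewrite mem_rcons in_cons; decide_eqs.
      rewrite aZ'; case: ifP => aZ.
      - exists a; split => //; split.
          have e := E1 a; rewrite aZ aF /= in e.
          rewrite !mem_rcons !in_cons; decide_eqs; rewrite /=.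
          by move: e; case: (a.+1 \in F); case: (a.+1 \in Z).
        split.
          by rewrite !mem_rcons !in_cons eqxx /= andbF.
        move=> v; rewrite !mem_rcons !in_cons.
        have e := E1 v.
        case: (eqVneq v a) => hv.
          { subst v; move: e aZ aF; fin. }
        case: (eqVneq v (a + n.+1)) => hv2.
          { subst v; move: e; fin. }
        case: (eqVneq v (a + n)) => hv3.
          { subst v; move: e; fin. }
        case: (eqVneq v a.-1) => hv5.
          { subst v; have := hltF a.-1 (ltac:(lia));
            have pa : (a.-1).+1 = a by lia.
            move: e aZ aF; rewrite pa; fin. }
        move: e; fin.
      - exists a.-1; split => //.
        have pa : (a.-1).+1 = a by lia.
        split.
          by rewrite pa !mem_rcons !in_cons eqxx aZ; decide_eqs.
        split.
          by rewrite !mem_rcons !in_cons hltF ?orbT ?andbF //; lia.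
        move=> v; rewrite !mem_rcons !in_cons.
        have e := E1 v.
        case: (eqVneq v a.-1) => hv.
          { subst v; have := hltF a.-1 (ltac:(lia)); move: e aZ aF; rewrite pa; fin. }
        case: (eqVneq v (a + n.+1)) => hv2.
          { subst v; move: e; fin. }
        case: (eqVneq v (a + n)) => hv3.
          { subst v; move: e; fin. }
        case: (eqVneq v a) => hv4.
          { subst v; move: e aZ aF; fin. }
        move: e; fin.
-
  rewrite gfE aF.
  have hleZ' : forall x, x \in Z -> x <= b + n.+1.
    by move=> x hx; have := hleZ x hx; lia.
  have gzE := @z_step Z n b szZ (ltnW hn) sz (ltac:(lia)) hltZ hleZ'.
  rewrite gzE; case: ifP => aZ; rewrite -ab in aZ *; rewrite aZ in pE.
  +
    subst p.
    split; first by right; right; left; lia.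
    exists a.+1, a.+1; split.
    * split => //; try lia; rewrite ?sF ?sZ; lia.
    * split.
      - move=> x hx; rewrite mem_rcons in_cons; case: (ltngtP x a) => h.
        + by rewrite hltF ?orbT.
        + lia.
        + by rewrite h aF orbT.
      - move=> x hx; rewrite mem_rcons in_cons; case: (ltngtP x a) => h.
        + by rewrite hltZ ?orbT // -ab.
        + lia.
        + by rewrite h aZ orbT.
      - move=> x; rewrite mem_rcons in_cons => /orP[/eqP->|/hleF]; lia.
      - move=> x; rewrite mem_rcons in_cons => /orP[/eqP->|/hleZ]; lia.
    * right; split => //.
      move/andP: P1 => [P1a P1b].
      split.
        by rewrite mem_rcons in_cons P1a orbT.
      exists a; split.
        rewrite mem_rcons in_cons (negbTE P1b); decide_eqs; by [].
      split.
        rewrite !mem_rcons !in_cons P1a (negbTE P1b); decide_eqs; by [].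
      split.
        by rewrite !mem_rcons !in_cons aF orbT andbF.
      move=> v; rewrite !mem_rcons !in_cons.
      have e := E0 v.
      case: (eqVneq v a) => hv.
        { subst v; move: e P1a P1b aF aZ; fin. }
      case: (eqVneq v (a + n.+2)) => hv2.
        { subst v; move: e; fin. }
      case: (eqVneq v (a + n.+1)) => hv3.
        { subst v; move: e; fin. }
      case: (eqVneq v (a + n)) => hv4.
        { subst v; move: e; fin. }
      move: e; fin.
  +
    split; first by right; right; right; lia.
    exists a.+1, a; split.
    * split => //; try lia; rewrite ?sF ?sZ; lia.
    * split.
      - move=> x hx; rewrite mem_rcons in_cons; case: (ltngtP x a) => h.
        + by rewrite hltF ?orbT.
        + lia.
        + by rewrite h aF orbT.
      - move=> x hx; rewrite mem_rcons in_cons hltZ ?orbT //; lia.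
      - move=> x; rewrite mem_rcons in_cons => /orP[/eqP->|/hleF]; lia.
      - move=> x; rewrite mem_rcons in_cons => /orP[/eqP->|/hleZ]; lia.
    * left; split => //; split.
        by rewrite mem_rcons in_cons eqxx.
      have a0 : 1 <= a := ha1.
      have pa : p.+1 = a by lia.
      move=> v; rewrite !mem_rcons !in_cons.
      have e := E0 v.
      case: (eqVneq v a) => hv.
        { subst v; move: e aZ aF; fin. }
      case: (eqVneq v (a + n.+1)) => hv2.
        { subst v; move: e; fin. }
      case: (eqVneq v (a + n)) => hv3.
        { subst v; move: e; fin. }
      case: (eqVneq v p) => hv4.
        { subst v; have := hltF p (ltac:(lia)); move: e P1 P2 aZ aF; rewrite pa; fin. }
      move: e; fin.
Qed.

Lemma size_hist ok n : size (greedy_hist ok n) = n.+1.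
Proof. by elim: n => //= n IH; rewrite size_rcons IH. Qed.

Lemma hist_S ok n :
  greedy_hist ok n.+1 = rcons (greedy_hist ok n) (greedy_next ok (greedy_hist ok n)).
Proof. by []. Qed.

Lemma inv_all n : 2 <= n ->
  exists a b, Inv n a b (greedy_hist f_ok n) (greedy_hist z_ok n).
Proof.
elim: n => // n IH hn.
case: (ltngtP n 1) => h; first lia.
- have [a [b I]] := IH h.
  have [_ [a' [b' I']]] := @step _ _ _ _ _ I (size_hist _ _) (size_hist _ _).
  by exists a', b'; rewrite !hist_S.
- subst n.
  have -> : greedy_hist f_ok 2 = [:: 0; 1; 3] by vm_compute.
  have -> : greedy_hist z_ok 2 = [:: 0; 1; 3] by vm_compute.
  exists 2, 1; split.
  + by split.
  + split.
    * by case=> [|[|]].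
    * by case=> [|].
    * by move=> x; rewrite !inE => /or3P[] /eqP ->.
    * by move=> x; rewrite !inE => /or3P[] /eqP ->.
  + left; split => //; split => //.
    by move=> v; rewrite andbN; case: (v.+1 \in _) => //=; rewrite andbF.
Qed.

Theorem theorem6 (n : nat) :
  z n = f n \/ z n = f n + n \/ z n = f n + 1 \/ z n + n = f n.
Proof.
case: (leqP n 2) => hn.
  by case: n hn => [|[|[|]]] //= _; left; vm_compute.
case: n hn => [|k] // hk.
have hk2 : 2 <= k by lia.
have [a [b I]] := @inv_all k hk2.
have [H _] := @step _ _ _ _ _ I (size_hist _ _) (size_hist _ _).
rewrite /z /f /greedy_seq !hist_S !nth_rcons !size_hist !ltnn !eqxx.
exact: H.
Qed.
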